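(* There is no embedding $\mathcal{B}^X \hookrightarrow \mathcal{K}_2^X$ for any $X \subseteq \omega$.
   Context: A partial combinatory algebra (pca) is a set $A$ with a partial binary application $\cdot$ containing distinct elements $\mathrm{s},\mathrm{k}$ with $\mathrm{k}ab\downarrow = a$, $\mathrm{s}ab\downarrow$, and $\mathrm{s}abc \simeq (ac)(bc)$. Given pcas $\mathcal{A},\mathcal{B}$, an embedding $\mathcal{A}\hookrightarrow\mathcal{B}$ is an injection $f$ such that whenever $aa'\downarrow$ in $\mathcal{A}$, $f(a)f(a')\downarrow = f(aa')$. Kleene's second model $\mathcal{K}_2$ is taken with carrier $\omega^\omega$ and application $g\cdot h = \Phi^{g\oplus h}_{g(0)}$, where $\Phi_e$ is the $e$-th Turing functional and $g\cdot h$ is defined iff the function on the right is total. Van Oosten's sequential computation model $\mathcal{B}$ is the same definition but with carrier the set of partial functions $\omega\rightharpoonup\omega$ (application always defined). For $X\subseteq\omega$, $\mathcal{K}_2^X$ is the sub-pca of $X$-computable total functions and $\mathcal{B}^X$ the sub-pca of partial $X$-computable functions. *)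

(* Defs.v *)
From HB Require Import structures.
From mathcomp Require Import all_boot.

Set Implicit Arguments.
Unset Strict Implicit.
Unset Printing Implicit Defensive.

Definition pfun := nat -> option nat.

Definition cpair (x y : nat) : nat := ((x + y) * (x + y).+1)./2 + y.

Fixpoint cunpair (z : nat) : nat * nat :=
  match z with
  | 0 => (0, 0)
  | z'.+1 => let: (x, y) := cunpair z' in
             if x is x'.+1 then (x', y.+1) else (y.+1, 0)
  end.

(* Unary oracle programs: a standard basis for the unary partial
   recursive functionals (with Cantor pairing). *)
Inductive prog : Type :=
| PZero | PSucc | PId | PFst | PSnd | POrc
| PComp of prog & prog     (* PComp f g = f o g *)
| PPair of prog & prog
| PPrec of prog & prog
| PMu of prog.

Fixpoint prog_to_tree (p : prog) : GenTree.tree nat :=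
  match p with
  | PZero => GenTree.Node 0 [::]
  | PSucc => GenTree.Node 1 [::]
  | PId => GenTree.Node 2 [::]
  | PFst => GenTree.Node 3 [::]
  | PSnd => GenTree.Node 4 [::]
  | POrc => GenTree.Node 5 [::]
  | PComp f g => GenTree.Node 6 [:: prog_to_tree f; prog_to_tree g]
  | PPair f g => GenTree.Node 7 [:: prog_to_tree f; prog_to_tree g]
  | PPrec f g => GenTree.Node 8 [:: prog_to_tree f; prog_to_tree g]
  | PMu f => GenTree.Node 9 [:: prog_to_tree f]
  end.

Fixpoint tree_to_prog (t : GenTree.tree nat) : option prog :=
  match t with
  | GenTree.Node 0 [::] => Some PZero
  | GenTree.Node 1 [::] => Some PSucc
  | GenTree.Node 2 [::] => Some PId
  | GenTree.Node 3 [::] => Some PFst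
  | GenTree.Node 4 [::] => Some PSnd
  | GenTree.Node 5 [::] => Some POrc
  | GenTree.Node 6 [:: t1; t2] =>
      if tree_to_prog t1 is Some f then
        if tree_to_prog t2 is Some g then Some (PComp f g) else None else None
  | GenTree.Node 7 [:: t1; t2] =>
      if tree_to_prog t1 is Some f then
        if tree_to_prog t2 is Some g then Some (PPair f g) else None else None
  | GenTree.Node 8 [:: t1; t2] =>
      if tree_to_prog t1 is Some f then
        if tree_to_prog t2 is Some g then Some (PPrec f g) else None else None
  | GenTree.Node 9 [:: t1] =>
      if tree_to_prog t1 is Some f then Some (PMu f) else None
  | _ => None
  end.

Lemma prog_treeK : pcancel prog_to_tree tree_to_prog.
Proof. by elim=> //= [f -> g ->|f -> g ->|f -> g ->|f ->]. Qed.

HB.instance Definition _ := Equality.copy prog (pcan_type prog_treeK).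
HB.instance Definition _ := Countable.copy prog (pcan_type prog_treeK).

(* A query to the oracle at a point where f is undefined diverges. *)
Inductive eval (f : pfun) : prog -> nat -> nat -> Prop :=
| EZero x : eval f PZero x 0
| ESucc x : eval f PSucc x x.+1
| EId x : eval f PId x x
| EFst z : eval f PFst z (cunpair z).1
| ESnd z : eval f PSnd z (cunpair z).2
| EOrc x v : f x = Some v -> eval f POrc x v
| EComp p q x y v : eval f q x y -> eval f p y v -> eval f (PComp p q) x v
| EPair p q x a b : eval f p x a -> eval f q x b -> eval f (PPair p q) x (cpair a b)
| EPrec0 p q x v : eval f p x v -> eval f (PPrec p q) (cpair x 0) v
| EPrecS p q x y w v : eval f (PPrec p q) (cpair x y) w ->
    eval f q (cpair x (cpair y w)) v -> eval f (PPrec p q) (cpair x y.+1) v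
| EMu p x y : eval f p (cpair x y) 0 ->
    (forall z, z < y -> exists w, eval f p (cpair x z) w.+1) ->
    eval f (PMu p) x y.

(* The e-th Turing functional: Phi e f n v  <->  Phi_e^f(n) converges to v.
   Indices not coding a program give the nowhere-defined functional. *)
Definition Phi (e : nat) (f : pfun) (n v : nat) : Prop :=
  exists p : prog, unpickle e = Some p /\ eval f p n v.

Definition pjoin (g h : pfun) : pfun :=
  fun n => if odd n then h n./2 else g n./2.

Definition chi (X : nat -> bool) : pfun := fun n => Some (nat_of_bool (X n)).

(* Partial X-computable functions (carrier of B^X). *)
Definition pcomputable (X : nat -> bool) (a : pfun) : Prop :=
  exists e, forall n v, a n = Some v <-> Phi e (chi X) n v.

(* Total X-computable functions (carrier of K_2^X). *)
Definition tcomputable (X : nat -> bool) (g : nat -> nat) : Prop :=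
  exists e, forall n, Phi e (chi X) n (g n).

(* Application in B: (a . b) = Phi_{a(0)}^{a (+) b}  (empty if a(0) undefined).
   Bapp a b c  <->  a . b = c. *)
Definition Bapp (a b c : pfun) : Prop :=
  forall n v, c n = Some v <-> exists e, a 0 = Some e /\ Phi e (pjoin a b) n v.

(* Application in K_2: K2app g h k <-> g . h is defined and equals k. *)
Definition K2app (g h k : nat -> nat) : Prop :=
  forall n, Phi (g 0) (pjoin (fun m => Some (g m)) (fun m => Some (h m))) n (k n).

(* Main.v *)
Require Import Defs.
From mathcomp Require Import all_boot.
From Stdlib Require Import Classical FunctionalExtensionality.
Set Implicit Arguments.
Unset Strict Implicit.
Unset Printing Implicit Defensive.

Lemma tri_succ d : ((d.+1) * d.+2)./2 = (d * d.+1)./2 + d.+1.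
Proof.
have -> : d.+1 * d.+2 = d * d.+1 + (d.+1).*2.
  by rewrite -muln2 [d * _]mulnC -mulnDr addn2.
by rewrite halfD odd_double andbF doubleK.
Qed.

Lemma cpairE x y : cpair x y = ((x + y) * (x + y).+1)./2 + y.
Proof. by []. Qed.

Lemma cpairS x y : cpair x y.+1 = (cpair x.+1 y).+1.
Proof. by rewrite !cpairE addSn addnS addnS. Qed.

Lemma cpair0S y : cpair y.+1 0 = (cpair 0 y).+1.
Proof. by rewrite !cpairE add0n !addn0 tri_succ addnS. Qed.

Definition cnext (p : nat * nat) : nat * nat :=
  let: (x, y) := p in if x is x'.+1 then (x', y.+1) else (y.+1, 0).
Lemma cunpairS z : cunpair z.+1 = cnext (cunpair z).
Proof. by []. Qed.

Lemma cpairK x y : cunpair (cpair x y) = (x, y).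
Proof.
move: {2}(cpair x y) (leqnn (cpair x y)) => n.
elim: n x y => [|n IH] x y.
  case: x => [|x]; case: y => [|y] //; rewrite ?cpairS ?cpair0S //.
case: y => [|y].
  case: x => [|x] //.
  by rewrite cpair0S ltnS => /IH H; rewrite cunpairS H.
by rewrite cpairS ltnS => /IH H; rewrite cunpairS H.
Qed.

Lemma cunpairK z : cpair (cunpair z).1 (cunpair z).2 = z.
Proof.
elim: z => [|z IH] //=.
case E: (cunpair z) IH => [[|x] y] /= <-.
  by rewrite cpair0S.
by rewrite cpairS.
Qed.

Section EvalInd.
Variable f : pfun.
Variable P : prog -> nat -> nat -> Prop.
Hypotheses
 (HZ : forall x, P PZero x 0)
 (HS : forall x, P PSucc x x.+1)
 (HI : forall x, P PId x x)
 (HF : forall z, P PFst z (cunpair z).1)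
 (HN : forall z, P PSnd z (cunpair z).2)
 (HO : forall x v, f x = Some v -> P POrc x v)
 (HC : forall p q x y v, eval f q x y -> P q x y -> eval f p y v -> P p y v -> P (PComp p q) x v)
 (HP : forall p q x a b, eval f p x a -> P p x a -> eval f q x b -> P q x b -> P (PPair p q) x (cpair a b))
 (HR0 : forall p q x v, eval f p x v -> P p x v -> P (PPrec p q) (cpair x 0) v)
 (HRS : forall p q x y w v, eval f (PPrec p q) (cpair x y) w -> P (PPrec p q) (cpair x y) w ->
    eval f q (cpair x (cpair y w)) v -> P q (cpair x (cpair y w)) v -> P (PPrec p q) (cpair x y.+1) v)
 (HM : forall p x y, eval f p (cpair x y) 0 -> P p (cpair x y) 0 ->
    (forall z, z < y -> exists w, eval f p (cpair x z) w.+1 /\ P p (cpair x z) w.+1) ->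
    P (PMu p) x y).

Fixpoint eval_ind2 p x v (d : eval f p x v) {struct d} : P p x v :=
  match d in eval _ p x v return P p x v with
  | EZero x => HZ x
  | ESucc x => HS x
  | EId x => HI x
  | EFst z => HF z
  | ESnd z => HN z
  | EOrc x v e => HO e
  | EComp p q x y v d1 d2 => HC d1 (eval_ind2 d1) d2 (eval_ind2 d2)
  | EPair p q x a b d1 d2 => HP d1 (eval_ind2 d1) d2 (eval_ind2 d2)
  | EPrec0 p q x v d1 => HR0 q d1 (eval_ind2 d1)
  | EPrecS p q x y w v d1 d2 => HRS d1 (eval_ind2 d1) d2 (eval_ind2 d2)
  | EMu p x y d1 H => HM d1 (eval_ind2 d1)
      (fun z hz => match H z hz with ex_intro w dw => ex_intro _ w (conj dw (eval_ind2 dw)) end)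
  end.
End EvalInd.

Lemma cpair_inj x y x' y' : cpair x y = cpair x' y' -> x = x' /\ y = y'.
Proof. by move=> E; have := cpairK x y; rewrite E cpairK => -[-> ->]. Qed.

Section Inv.
Variable f : pfun.
Lemma inv_zero x v : eval f PZero x v -> v = 0. Proof. by move=> H; inversion H. Qed.
Lemma inv_succ x v : eval f PSucc x v -> v = x.+1. Proof. by move=> H; inversion H. Qed.
Lemma inv_id x v : eval f PId x v -> v = x. Proof. by move=> H; inversion H. Qed.
Lemma inv_fst x v : eval f PFst x v -> v = (cunpair x).1. Proof. by move=> H; inversion H. Qed.
Lemma inv_snd x v : eval f PSnd x v -> v = (cunpair x).2. Proof. by move=> H; inversion H. Qed.
Lemma inv_orc x v : eval f POrc x v -> f x = Some v. Proof. by move=> H; inversion H. Qed.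
Lemma inv_comp p q x v : eval f (PComp p q) x v -> exists y, eval f q x y /\ eval f p y v.
Proof. by move=> H; inversion H; eauto. Qed.
Lemma inv_pair p q x v : eval f (PPair p q) x v ->
  exists a b, [/\ eval f p x a, eval f q x b & v = cpair a b].
Proof. by move=> H; inversion H; do 2 eexists; split; eauto. Qed.
Lemma inv_prec p q x y v : eval f (PPrec p q) (cpair x y) v ->
  if y is y'.+1 then exists w, eval f (PPrec p q) (cpair x y') w /\ eval f q (cpair x (cpair y' w)) v
  else eval f p x v.
Proof.
move=> H; inversion H; subst;
  match goal with E : cpair _ _ = cpair _ _ |- _ => case: (cpair_inj E) => <- <- end; eauto.
Qed.
Lemma inv_mu p x y : eval f (PMu p) x y ->
  eval f p (cpair x y) 0 /\ (forall z, z < y -> exists w, eval f p (cpair x z) w.+1).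
Proof. by move=> H; inversion H; eauto. Qed.
End Inv.

Lemma eval_det f p x v : eval f p x v -> forall v', eval f p x v' -> v = v'.
Proof.
elim/eval_ind2 => {p x v}.
- by move=> x v' /inv_zero.
- by move=> x v' /inv_succ.
- by move=> x v' /inv_id.
- by move=> x v' /inv_fst.
- by move=> x v' /inv_snd.
- by move=> x v e v' /inv_orc; congruence.
- move=> p q x y v _ IHq _ IHp v' /inv_comp [y' [H1 H2]].
  by have E := IHq _ H1; subst; apply: IHp.
- move=> p q x a b _ IHp _ IHq v' /inv_pair [a' [b' [H1 H2 ->]]].
  by rewrite (IHp _ H1) (IHq _ H2).
- by move=> p q x v _ IH v' /inv_prec; apply: IH.
- move=> p q x y w v _ IH1 _ IH2 v' /inv_prec [w' [H1 H2]].
  by have E := IH1 _ H1; subst; apply: IH2.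
- move=> p x y _ IH0 Hlt v' /inv_mu [H0 H2].
  case: (ltngtP y v') => // [lt|lt].
  + by case: (H2 _ lt) => w /IH0.
  + case: (Hlt _ lt) => w [_ IHw].
    by have := IHw _ H0.
Qed.

Lemma eval_ext f g p x v : (forall n, f n = g n) -> eval f p x v -> eval g p x v.
Proof.
move=> fg; elim/eval_ind2 => {p x v}; try by intros; econstructor; eauto.
- by move=> x v e; constructor; rewrite -fg.
- move=> p x y _ IH H; constructor => // z /H [w [_ ?]]; by exists w.
Qed.


Fixpoint constp n := if n is n'.+1 then PComp PSucc (constp n') else PZero.
Definition ONE := PComp PSucc PZero.
Definition ifzP (pc pa pb : prog) := PComp (PPrec pa (PComp pb PFst)) (PPair PId pc).
Definition PREDP := PComp (PPrec PZero (PComp PFst PSnd)) (PPair PZero PId).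
Definition SUBP := PPrec PId (PComp PREDP (PComp PSnd PSnd)).
Definition SUBR := PComp SUBP (PPair PSnd PFst).
Definition EQP := ifzP SUBP (ifzP SUBR ONE PZero) PZero.

Fixpoint precf (fb fs : nat -> nat) x y :=
  if y is y'.+1 then fs (cpair x (cpair y' (precf fb fs x y'))) else fb x.

Section Comb.
Variable f : pfun.

Lemma constp_ok n x : eval f (constp n) x n.
Proof. elim: n => [|n IH] /=; [constructor | econstructor; [exact: IH | constructor]]. Qed.

Lemma one_ok x : eval f ONE x 1.
Proof. exact: (constp_ok 1). Qed.

Lemma comp_ok p q x y v : eval f q x y -> eval f p y v -> eval f (PComp p q) x v.
Proof. exact: EComp. Qed.

Lemma prec_ok pb ps fb fs x y :
  (forall x, eval f pb x (fb x)) -> (forall z, eval f ps z (fs z)) ->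
  eval f (PPrec pb ps) (cpair x y) (precf fb fs x y).
Proof.
move=> Hb Hs; elim: y => [|y IH] /=; first exact: EPrec0.
exact: EPrecS IH (Hs _).
Qed.

Lemma ifzP_ok pc pa pb x c a b : eval f pc x c -> eval f pa x a -> eval f pb x b ->
  eval f (ifzP pc pa pb) x (if c is 0 then a else b).
Proof.
move=> Hc Ha Hb; apply: EComp; first by apply: EPair; [constructor|exact: Hc].
case: c {Hc} => [|c]; first exact: EPrec0.
have H0 : eval f (PPrec pa (PComp pb PFst)) (cpair x c) (if c is 0 then a else b).
  elim: c => [|c IH]; first exact: EPrec0.
  apply: EPrecS IH _; apply: EComp; first exact: EFst.
  by rewrite cpairK.
apply: EPrecS H0 _; apply: EComp; first exact: EFst.
by rewrite cpairK.
Qed.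

Lemma predp_ok y : eval f PREDP y y.-1.
Proof.
apply: (@EComp _ _ _ _ (cpair 0 y)); first by apply: EPair; constructor.
case: y => [|y]; first by apply: EPrec0; constructor.
have H : eval f (PPrec PZero (PComp PFst PSnd)) (cpair 0 y) (precf (fun _ => 0) (fun z => (cunpair (cunpair z).2).1) 0 y).
  apply: prec_ok => *; [constructor | apply: EComp; constructor].
apply: EPrecS H _.
apply: EComp; first exact: ESnd.
have := EFst f (cpair y (precf (fun=> 0) (fun z : nat => (cunpair (cunpair z).2).1) 0 y)).
by rewrite !cpairK.
Qed.

Lemma subp_ok a b : eval f SUBP (cpair a b) (a - b).
Proof.
elim: b => [|b IH]; first by rewrite subn0; apply: EPrec0; constructor.
apply: EPrecS IH _; apply: (@EComp _ _ _ _ (a - b)).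
  apply: EComp; first exact: ESnd.
  have := ESnd f (cpair b (a - b)); rewrite !cpairK /=; apply.
rewrite subnS; exact: predp_ok.
Qed.

Lemma eqp_ok a b : eval f EQP (cpair a b) (a == b).
Proof.
have H1 := subp_ok a b.
have H2 : eval f SUBR (cpair a b) (b - a).
  apply: (@EComp _ _ _ _ (cpair b a)); last exact: subp_ok.
  by have := EPair (ESnd f (cpair a b)) (EFst f (cpair a b)); rewrite cpairK.
have := ifzP_ok H1 (ifzP_ok H2 (one_ok _) (EZero _ _)) (EZero _ _).
case: (ltngtP a b) => [lt|lt|->]; last by rewrite subnn.
- by rewrite (eqP (ltnW lt)) /= ; case: (b - a) (subn_gt0 a b) => [|n]; rewrite lt.
- by case: (a - b) (subn_gt0 b a) => [|n]; rewrite lt.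
Qed.
End Comb.

Inductive ex : Type :=
| eX | eC of nat | eS of ex | eFst of ex | eSnd of ex | ePair of ex & ex
| eOrc of ex | eComp of ex & ex | eIfz of ex & ex & ex | eEq of ex & ex
| ePred of ex | eRec of ex & ex & ex.

Fixpoint den (g : nat -> nat) (e : ex) (x : nat) {struct e} : nat :=
  match e with
  | eX => x
  | eC n => n
  | eS a => (den g a x).+1
  | eFst a => (cunpair (den g a x)).1
  | eSnd a => (cunpair (den g a x)).2
  | ePair a b => cpair (den g a x) (den g b x)
  | eOrc a => g (den g a x)
  | eComp a b => den g a (den g b x)
  | eIfz c a b => if den g c x is 0 then den g a x else den g b x
  | eEq a b => nat_of_bool (den g a x == den g b x)
  | ePred a => (den g a x).-1
  | eRec b s n => precf (den g b) (den g s) x (den g n x)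
  end.

Fixpoint comp (e : ex) : prog :=
  match e with
  | eX => PId
  | eC n => constp n
  | eS a => PComp PSucc (comp a)
  | eFst a => PComp PFst (comp a)
  | eSnd a => PComp PSnd (comp a)
  | ePair a b => PPair (comp a) (comp b)
  | eOrc a => PComp POrc (comp a)
  | eComp a b => PComp (comp a) (comp b)
  | eIfz c a b => ifzP (comp c) (comp a) (comp b)
  | eEq a b => PComp EQP (PPair (comp a) (comp b))
  | ePred a => PComp PREDP (comp a)
  | eRec b s n => PComp (PPrec (comp b) (comp s)) (PPair PId (comp n))
  end.

Lemma comp_ok_gen f g : (forall n, f n = Some (g n)) ->
  forall e x, eval f (comp e) x (den g e x).
Proof.
move=> fg; elim=> /=.
- by move=> x; constructor.
- by move=> n x; exact: constp_ok.
- by move=> a IH x; apply: EComp (IH x) _; constructor.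
- by move=> a IH x; apply: EComp (IH x) _; constructor.
- by move=> a IH x; apply: EComp (IH x) _; constructor.
- by move=> a IHa b IHb x; apply: EPair.
- by move=> a IH x; apply: EComp (IH x) _; constructor.
- by move=> a IHa b IHb x; apply: EComp (IHb x) _.
- by move=> c IHc a IHa b IHb x; apply: ifzP_ok.
- by move=> a IHa b IHb x; apply: EComp; [apply: EPair; [exact: IHa|exact: IHb] | exact: eqp_ok].
- by move=> a IH x; apply: EComp (IH x) _; exact: predp_ok.
- move=> b IHb s IHs n IHn x; apply: EComp; first by apply: EPair; [constructor|exact: IHn].
  exact: prec_ok.
Qed.


Arguments cpair : simpl never.
Opaque cpair.

Fixpoint code (p : prog) : nat :=
  match p with
  | PZero => cpair 0 0
  | PSucc => cpair 1 0
  | PId => cpair 2 0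
  | PFst => cpair 3 0
  | PSnd => cpair 4 0
  | POrc => cpair 5 0
  | PComp p q => cpair 6 (cpair (code p) (code q))
  | PPair p q => cpair 7 (cpair (code p) (code q))
  | PPrec p q => cpair 8 (cpair (code p) (code q))
  | PMu p => cpair 9 (code p)
  end.

Definition cE pc x k := cpair 0 (cpair pc (cpair x k)).
Definition cR v k := cpair 1 (cpair v k).
Definition kcons fr k := cpair 1 (cpair fr k).
Definition knil := cpair 0 0.
Definition frComp p := cpair 0 p.
Definition frPair1 q x := cpair 1 (cpair q x).
Definition frPair2 a := cpair 2 a.
Definition frPrec q x i y := cpair 3 (cpair q (cpair x (cpair i y))).
Definition frMu p x y := cpair 4 (cpair p (cpair x y)).

Fixpoint sel (t : ex) (i : nat) (bs : seq ex) (d : ex) : ex :=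
  if bs is b :: bs' then eIfz (eEq t (eC i)) (sel t i.+1 bs' d) b else d.

Definition mkE pc x k := ePair (eC 0) (ePair pc (ePair x k)).
Definition mkR v k := ePair (eC 1) (ePair v k).
Definition mkCons fr k := ePair (eC 1) (ePair fr k).
Definition mfComp p := ePair (eC 0) p.
Definition mfPair1 q x := ePair (eC 1) (ePair q x).
Definition mfPair2 a := ePair (eC 2) a.
Definition mfPrec q x i y := ePair (eC 3) (ePair q (ePair x (ePair i y))).
Definition mfMu p x y := ePair (eC 4) (ePair p (ePair x y)).

Definition crest := eSnd eX.
Definition Epc := eFst crest.
Definition Ex := eFst (eSnd crest).
Definition Ek := eSnd (eSnd crest).
Definition Etag := eFst Epc.
Definition Earg := eSnd Epc.
Definition Rv := eFst crest.
Definition Rk := eSnd crest.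
Definition Rfr := eFst (eSnd Rk).
Definition Rk' := eSnd (eSnd Rk).
Definition Rfd := eSnd Rfr.

Definition EVBR := [:: mkR (eC 0) Ek; mkR (eS Ex) Ek; mkR Ex Ek; mkR (eFst Ex) Ek;
                 mkR (eSnd Ex) Ek; mkR (eOrc Ex) Ek;
                 mkE (eSnd Earg) Ex (mkCons (mfComp (eFst Earg)) Ek);
                 mkE (eFst Earg) Ex (mkCons (mfPair1 (eSnd Earg) Ex) Ek);
                 mkE (eFst Earg) (eFst Ex) (mkCons (mfPrec (eSnd Earg) (eFst Ex) (eC 0) (eSnd Ex)) Ek);
                 mkE Earg (ePair Ex (eC 0)) (mkCons (mfMu Earg Ex (eC 0)) Ek)].
Definition EVALCASE := sel Etag 0 EVBR eX.

Definition Fq := eFst Rfd.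
Definition Fx := eFst (eSnd Rfd).
Definition Fi := eFst (eSnd (eSnd Rfd)).
Definition Fy := eSnd (eSnd (eSnd Rfd)).
Definition My := eSnd (eSnd Rfd).

Definition RTBR := [:: mkE Rfd Rv Rk';
         mkE (eFst Rfd) (eSnd Rfd) (mkCons (mfPair2 Rv) Rk');
         mkR (ePair Rfd Rv) Rk';
         eIfz (eEq Fi Fy) (mkE Fq (ePair Fx (ePair Fi Rv)) (mkCons (mfPrec Fq Fx (eS Fi) Fy) Rk'))
              (mkR Rv Rk');
         eIfz Rv (mkR My Rk') (mkE Fq (ePair Fx (eS My)) (mkCons (mfMu Fq Fx (eS My)) Rk'))].
Definition RETCASE := eIfz (eFst Rk) eX (sel (eFst Rfr) 0 RTBR eX).

Definition STEP := eIfz (eFst eX) EVALCASE RETCASE.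

Definition step g := den g STEP.

Lemma den_ifz g c a b x : den g (eIfz c a b) x = if den g c x is 0 then den g a x else den g b x.
Proof. by []. Qed.

Lemma den_sel g t i bs d x : den g (sel t i bs d) x =
  if (i <= den g t x) && (den g t x < i + size bs) then den g (nth d bs (den g t x - i)) x
  else den g d x.
Proof.
set T := den g t x.
elim: bs i => [|b bs IH] i.
  rewrite [LHS]/= addn0; case: leqP => //= h; by rewrite ltnNge h.
rewrite [LHS]/= IH -/T.
case: eqP => [->|ne] /=.
  by rewrite leqnn subnn addnS ltnS leq_addr.
case: (ltngtP T i) => [lt|gt|eq]; last by case: ne.
- by [].
- rewrite /= addSnnS subnS.
  have: 0 < T - i by rewrite subn_gt0.
  by case: (T - i).
Qed.

Section Steps.
Variable g : nat -> nat.
Lemma stepE pc x k : step g (cE pc x k) = den g EVALCASE (cE pc x k).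
Proof. by rewrite /step /STEP den_ifz [den g (eFst eX) _]/= /cE cpairK. Qed.
Lemma stepR v k : step g (cR v k) = den g RETCASE (cR v k).
Proof. by rewrite /step /STEP den_ifz [den g (eFst eX) _]/= /cR cpairK. Qed.
Lemma evalcase pc x k : den g EVALCASE (cE pc x k) =
  if (cunpair pc).1 < 10 then den g (nth eX EVBR (cunpair pc).1) (cE pc x k) else cE pc x k.
Proof. by rewrite /EVALCASE den_sel [den g Etag _]/= /cE !cpairK subn0. Qed.
Lemma retcase_nil v : den g RETCASE (cR v knil) = cR v knil.
Proof. by rewrite /RETCASE den_ifz [den g (eFst Rk) _]/= /cR /knil !cpairK. Qed.
Lemma retcase fr v k : den g RETCASE (cR v (kcons fr k)) =
  if (cunpair fr).1 < 5 then den g (nth eX RTBR (cunpair fr).1) (cR v (kcons fr k)) else cR v (kcons fr k).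
Proof.
rewrite /RETCASE den_ifz [den g (eFst Rk) _]/= /cR /kcons !cpairK; cbv beta iota delta [fst snd].
by rewrite den_sel [den g (eFst Rfr) _]/= !cpairK subn0.
Qed.

Ltac stE := rewrite stepE evalcase [code _]/= cpairK /= /cE /kcons /frComp /frPair1 /frPrec /frMu;
  repeat (rewrite !cpairK /=).
Ltac stR := rewrite stepR /kcons retcase /frComp /frPair1 /frPair2 /frPrec /frMu cpairK /= /cE /cR /kcons;
  repeat (rewrite !cpairK /=).

Lemma st_zero x k : step g (cE (code PZero) x k) = cR 0 k. Proof. by stE. Qed.
Lemma st_succ x k : step g (cE (code PSucc) x k) = cR x.+1 k. Proof. by stE. Qed.
Lemma st_id x k : step g (cE (code PId) x k) = cR x k. Proof. by stE. Qed.
Lemma st_fst x k : step g (cE (code PFst) x k) = cR (cunpair x).1 k. Proof. by stE. Qed.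
Lemma st_snd x k : step g (cE (code PSnd) x k) = cR (cunpair x).2 k. Proof. by stE. Qed.
Lemma st_orc x k : step g (cE (code POrc) x k) = cR (g x) k. Proof. by stE. Qed.
Lemma st_comp p q x k : step g (cE (code (PComp p q)) x k) = cE (code q) x (kcons (frComp (code p)) k).
Proof. by stE. Qed.
Lemma st_pair p q x k : step g (cE (code (PPair p q)) x k) = cE (code p) x (kcons (frPair1 (code q) x) k).
Proof. by stE. Qed.
Lemma st_prec p q x y k : step g (cE (code (PPrec p q)) (cpair x y) k) =
  cE (code p) x (kcons (frPrec (code q) x 0 y) k).
Proof. by stE. Qed.
Lemma st_mu p x k : step g (cE (code (PMu p)) x k) = cE (code p) (cpair x 0) (kcons (frMu (code p) x 0) k).
Proof. by stE. Qed.
Lemma st_rnil v : step g (cR v knil) = cR v knil. Proof. by rewrite stepR retcase_nil. Qed.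
Lemma st_rcomp p v k : step g (cR v (kcons (frComp p) k)) = cE p v k. Proof. by stR. Qed.
Lemma st_rpair1 q x v k : step g (cR v (kcons (frPair1 q x) k)) = cE q x (kcons (frPair2 v) k).
Proof. by stR. Qed.
Lemma st_rpair2 a v k : step g (cR v (kcons (frPair2 a) k)) = cR (cpair a v) k. Proof. by stR. Qed.
Lemma st_rprec_eq q x y v k : step g (cR v (kcons (frPrec q x y y) k)) = cR v k.
Proof. by stR; rewrite eqxx. Qed.
Lemma st_rprec_lt q x i y v k : i != y -> step g (cR v (kcons (frPrec q x i y) k)) =
  cE q (cpair x (cpair i v)) (kcons (frPrec q x i.+1 y) k).
Proof. by move=> /negbTE H; stR; rewrite H. Qed.
Lemma st_rmu0 p x y k : step g (cR 0 (kcons (frMu p x y) k)) = cR y k. Proof. by stR. Qed.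
Lemma st_rmuS p x y w k : step g (cR w.+1 (kcons (frMu p x y) k)) =
  cE p (cpair x y.+1) (kcons (frMu p x y.+1) k).
Proof. by stR. Qed.
End Steps.

Opaque cpair.

Definition reach g c c' := exists n, iter n (step g) c = c'.

Lemma reach_refl g c : reach g c c. Proof. by exists 0. Qed.
Lemma reach_trans g a b c : reach g a b -> reach g b c -> reach g a c.
Proof. by move=> [n <-] [m <-]; exists (m + n); rewrite iterD. Qed.
Lemma reach_step g a b c : step g a = b -> reach g b c -> reach g a c.
Proof. by move=> E [m <-]; exists (m + 1); rewrite iterD /= E. Qed.

Lemma machine_ok g p x v : eval (fun n => Some (g n)) p x v ->
  (forall k, reach g (cE (code p) x k) (cR v k)) /\
  (match p with PPrec p1 q1 => forall k y', (cunpair x).2 <= y' ->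
       reach g (cE (code p1) (cunpair x).1 (kcons (frPrec (code q1) (cunpair x).1 0 y') k))
               (cR v (kcons (frPrec (code q1) (cunpair x).1 (cunpair x).2 y') k))
   | _ => True end).
Proof.
elim/eval_ind2 => {p x v}.
- by split=> // k; apply: reach_step (st_zero _ _ _) (reach_refl _ _).
- by split=> // k; apply: reach_step (st_succ _ _ _) (reach_refl _ _).
- by split=> // k; apply: reach_step (st_id _ _ _) (reach_refl _ _).
- by split=> // k; apply: reach_step (st_fst _ _ _) (reach_refl _ _).
- by split=> // k; apply: reach_step (st_snd _ _ _) (reach_refl _ _).
- move=> x v [<-]; by split=> // k; apply: reach_step (st_orc _ _ _) (reach_refl _ _).
- move=> p q x y v _ [IHq _] _ [IHp _]; split=> // k.
  apply: reach_step (st_comp _ _ _ _ _) _; apply: reach_trans (IHq _) _.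
  by apply: reach_step (st_rcomp _ _ _ _) _; apply: IHp.
- move=> p q x a b _ [IHp _] _ [IHq _]; split=> // k.
  apply: reach_step (st_pair _ _ _ _ _) _; apply: reach_trans (IHp _) _.
  apply: reach_step (st_rpair1 _ _ _ _ _) _; apply: reach_trans (IHq _) _.
  by apply: reach_step (st_rpair2 _ _ _ _) (reach_refl _ _).
- move=> p q x v _ [IHp _]; split; last by rewrite cpairK /= => k y' _; apply: IHp.
  move=> k; apply: reach_step (st_prec _ _ _ _ _ _) _; apply: reach_trans (IHp _) _.
  by apply: reach_step (st_rprec_eq _ _ _ _ _ _) (reach_refl _ _).
- move=> p q x y w v _ [_ IH1] _ [IH2 _]; rewrite cpairK /= in IH1.
  have H2 : forall k y', y < y' -> reach g (cE (code p) x (kcons (frPrec (code q) x 0 y') k))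
                          (cR v (kcons (frPrec (code q) x y.+1 y') k)).
    move=> k y' lt; apply: reach_trans (IH1 _ _ (ltnW lt)) _.
    have ne : y != y' by rewrite neq_ltn lt.
    have E1 := st_rprec_lt g (code q) x w k ne; apply: reach_step E1 _.
    exact: IH2.
  split=> [k|]; last by rewrite cpairK; exact: H2.
  apply: reach_step (st_prec _ _ _ _ _ _) _; apply: reach_trans (H2 _ _ (ltnSn y)) _.
  by apply: reach_step (st_rprec_eq _ _ _ _ _ _) (reach_refl _ _).
- move=> p x y _ [IH0 _] Hlt; split=> // k.
  apply: reach_step (st_mu _ _ _ _) _.
  have H : forall i, i <= y -> reach g (cE (code p) (cpair x 0) (kcons (frMu (code p) x 0) k))
                                  (cE (code p) (cpair x i) (kcons (frMu (code p) x i) k)).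
    elim=> [|i IH] hi; first exact: reach_refl.
    apply: reach_trans (IH (ltnW hi)) _.
    case: (Hlt _ hi) => w [_ [IHw _]].
    apply: reach_trans (IHw _) _.
    by apply: reach_step (st_rmuS _ _ _ _ _ _) (reach_refl _ _).
  apply: reach_trans (H _ (leqnn y)) _; apply: reach_trans (IH0 _) _.
  by apply: reach_step (st_rmu0 _ _ _ _ _) (reach_refl _ _).
Qed.

Opaque cpair.

Definition INITex := mkE (eFst eX) (eSnd eX) (eC knil).
Definition ITER := PPrec (comp INITex) (PComp (comp STEP) (PComp PSnd PSnd)).
Definition NHex := eIfz (eFst eX) (eC 1) (eIfz (eFst (eSnd (eSnd eX))) (eC 0) (eC 1)).
Definition MUp := PMu (PComp (comp NHex) ITER).
Definition OUTex := eFst (eSnd eX).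
Definition U := PComp (comp OUTex) (PComp ITER (PPair PId MUp)).

Definition halted c := ((cunpair c).1 != 0) && ((cunpair (cunpair (cunpair c).2).2).1 == 0).

Lemma halted_fix g c : halted c -> step g c = c.
Proof.
move=> /andP [H1 H2]; rewrite /step /STEP den_ifz [den g (eFst eX) c]/=.
case: ((cunpair c).1) H1 => // _ _.
by rewrite /RETCASE den_ifz [den g (eFst Rk) c]/= (eqP H2).
Qed.

Lemma den_NH g c : den g NHex c = ~~ halted c.
Proof.
rewrite /NHex /halted /= ; case: ((cunpair c).1) => //= _.
by case: ((cunpair (cunpair (cunpair c).2).2).1).
Qed.

Section U.
Variable g : nat -> nat.
Let f := fun n => Some (g n).

Lemma iter_ok z t : eval f ITER (cpair z t) (iter t (step g) (den g INITex z)).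
Proof.
have -> : iter t (step g) (den g INITex z) =
   precf (den g INITex) (fun w => step g (cunpair (cunpair w).2).2) z t.
  by elim: t => //= t ->; rewrite !cpairK.
apply: prec_ok => [x|w]; first exact: comp_ok_gen.
apply: EComp; first by apply: EComp; constructor.
exact: comp_ok_gen.
Qed.

Lemma U_ok p x v : eval f p x v -> eval f U (cpair (code p) x) v.
Proof.
move=> /machine_ok [/(_ knil) [n Hn] _].
set z := cpair (code p) x.
have Hinit : den g INITex z = cE (code p) x knil by rewrite /= !cpairK.
have exP : exists t, halted (iter t (step g) (den g INITex z)).
  exists n; rewrite Hinit Hn /halted /cR /knil !cpairK.
  by [].
case: (ex_minnP exP) => t0 Ht0 Hmin.
have Hval : iter t0 (step g) (den g INITex z) = cR v knil.
  have le : t0 <= n by apply: Hmin; rewrite Hinit Hn /halted /cR /knil !cpairK.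
  rewrite -Hn -Hinit -(subnK le) iterD.
  by rewrite [RHS]iter_fix //; apply: halted_fix.
have CO := @comp_ok_gen f g (fun n => erefl).
apply: (@EComp _ _ _ _ (iter t0 (step g) (den g INITex z))); last first.
  by rewrite Hval; have := CO OUTex (cR v knil); rewrite /= /cR !cpairK.
apply: (@EComp _ _ _ _ (cpair z t0)); last exact: iter_ok.
apply: EPair; first constructor.
apply: EMu.
  apply: EComp; first exact: iter_ok.
  by have := CO NHex (iter t0 (step g) (den g INITex z)); rewrite den_NH Ht0.
move=> w lt; exists 0; apply: EComp; first exact: iter_ok.
have := CO NHex (iter w (step g) (den g INITex z)); rewrite den_NH.
suff -> : halted (iter w (step g) (den g INITex z)) = false by [].
by apply/negbTE/negP => /Hmin; rewrite leqNgt lt.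
Qed.
End U.

Opaque cpair.

Fixpoint subst (p r : prog) : prog :=
  match p with
  | POrc => r
  | PComp a b => PComp (subst a r) (subst b r)
  | PPair a b => PPair (subst a r) (subst b r)
  | PPrec a b => PPrec (subst a r) (subst b r)
  | PMu a => PMu (subst a r)
  | _ => p
  end.

Section Subst.
Variables (f g : pfun) (G : nat -> nat) (r : prog).
Hypothesis gG : forall j, g j = Some (G j).
Hypothesis rG : forall j, eval f r j (G j).

Lemma subst_ok p x v : eval g p x v -> eval f (subst p r) x v.
Proof.
elim/eval_ind2 => {p x v}; try by intros; econstructor; eauto.
- by move=> x v; rewrite gG => -[<-].
- move=> p x y _ IH H /=; constructor => // z /H [w [_ ?]]; by exists w.
Qed.

Ltac leafT orc r :=
  let p := fresh "p" in
  intro p; case: p => /=; intros; try discriminate;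
  (match goal with E : r = _ |- _ => apply: orc; rewrite E; constructor; by eauto
   | E : _ = r |- _ => apply: orc; rewrite -E; constructor; by eauto
   | _ => constructor; by eauto end).

Lemma subst_rev p x v : eval f (subst p r) x v -> eval g p x v.
Proof.
move=> H.
have orc : forall x v, eval f r x v -> eval g POrc x v.
  by move=> x' v' /(eval_det (rG x')) <-; constructor.
move: {-1}(subst p r) (erefl (subst p r)) H => q Eq H.
elim/eval_ind2: H p Eq => {q x v}.
- by move=> x; leafT orc r.
- by move=> x; leafT orc r.
- by move=> x; leafT orc r.
- by move=> x; leafT orc r.
- by move=> x; leafT orc r.
- by move=> x v e; leafT orc r.
- move=> p q x y v H1 IH1 H2 IH2 [] //= => [E|a b [Ea Eb]].
  + by apply: orc; rewrite E; apply: EComp H1 H2.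
  + by subst; apply: EComp (IH1 _ erefl) (IH2 _ erefl).
- move=> p q x a b H1 IH1 H2 IH2 [] //= => [E|a' b' [Ea Eb]].
  + by apply: orc; rewrite E; apply: EPair H1 H2.
  + by subst; apply: EPair (IH1 _ erefl) (IH2 _ erefl).
- move=> p q x v H1 IH1 [] //= => [E|a' b' [Ea Eb]].
  + by apply: orc; rewrite E; apply: EPrec0 H1.
  + by subst; apply: EPrec0 (IH1 _ erefl).
- move=> p q x y w v H1 IH1 H2 IH2 [] //= => [E|a' b' [Ea Eb]].
  + by apply: orc; rewrite E; apply: EPrecS H1 H2.
  + by subst; apply: EPrecS (IH1 (PPrec a' b') erefl) (IH2 _ erefl).
- move=> p x y H0 IH0 Hlt [] //= => [E|a Ea].
  + apply: orc; rewrite E; apply: EMu H0 _ => z /Hlt [w [? _]]; by exists w.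
  + case: Ea => Ea; subst; apply: EMu (IH0 a erefl) _ => z /Hlt [w [_ IHw]]; by exists w; apply: (IHw a).
Qed.
End Subst.

Inductive tprog : Type :=
| THole | TEmb of prog | TComp of tprog & tprog | TPair of tprog & tprog
| TPrec of tprog & tprog | TMu of tprog.

Fixpoint inst (t : tprog) (r : prog) : prog :=
  match t with
  | THole => r
  | TEmb p => p
  | TComp a b => PComp (inst a r) (inst b r)
  | TPair a b => PPair (inst a r) (inst b r)
  | TPrec a b => PPrec (inst a r) (inst b r)
  | TMu a => PMu (inst a r)
  end.

Fixpoint tcode (t : tprog) (n : nat) : nat :=
  match t with
  | THole => n
  | TEmb p => code p
  | TComp a b => cpair 6 (cpair (tcode a n) (tcode b n))
  | TPair a b => cpair 7 (cpair (tcode a n) (tcode b n))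
  | TPrec a b => cpair 8 (cpair (tcode a n) (tcode b n))
  | TMu a => cpair 9 (tcode a n)
  end.

Fixpoint tsubst (p : prog) (t : tprog) : tprog :=
  match p with
  | POrc => t
  | PComp a b => TComp (tsubst a t) (tsubst b t)
  | PPair a b => TPair (tsubst a t) (tsubst b t)
  | PPrec a b => TPrec (tsubst a t) (tsubst b t)
  | PMu a => TMu (tsubst a t)
  | _ => TEmb p
  end.

Fixpoint tx (t : tprog) : ex :=
  match t with
  | THole => eX
  | TEmb p => eC (code p)
  | TComp a b => ePair (eC 6) (ePair (tx a) (tx b))
  | TPair a b => ePair (eC 7) (ePair (tx a) (tx b))
  | TPrec a b => ePair (eC 8) (ePair (tx a) (tx b))
  | TMu a => ePair (eC 9) (tx a)
  end.

Lemma inst_tsubst p t r : inst (tsubst p t) r = subst p (inst t r).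
Proof. by elim: p => //= [a -> b ->|a -> b ->|a -> b ->|a ->]. Qed.

Lemma code_inst t r : code (inst t r) = tcode t (code r).
Proof. by elim: t => //= [a -> b ->|a -> b ->|a -> b ->|a ->]. Qed.

Lemma den_tx g t n : den g (tx t) n = tcode t n.
Proof. by elim: t => //= [a -> b ->|a -> b ->|a -> b ->|a ->]. Qed.

Definition HPW := eSnd (eSnd eX).
Definition HPex := eRec (eC (cpair 0 0))
  (eIfz (eSnd HPW) (ePair (eFst HPW) (eC 1)) (ePair (eS (eFst HPW)) (eC 0))) eX.
Definition HALF := PComp PFst (comp HPex).
Definition PARITY := PComp PSnd (comp HPex).

Lemma den_HP g y : den g HPex y = cpair y./2 (odd y).
Proof.
rewrite /HPex [den _ _ _]/=; move: {1}y => x.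
elim: y => [|y IH] //=.
by rewrite IH !cpairK /= uphalf_half; case: (odd y); rewrite ?add0n ?add1n.
Qed.

Section Join.
Variable f : pfun.
Hypothesis ftot : exists g, forall n, f n = Some (g n).

Lemma half_ok y : eval f HALF y y./2.
Proof.
case: ftot => g fg; apply: EComp; first exact: (comp_ok_gen fg).
by have := EFst f (den g HPex y); rewrite den_HP cpairK.
Qed.

Lemma parity_ok y : eval f PARITY y (odd y).
Proof.
case: ftot => g fg; apply: EComp; first exact: (comp_ok_gen fg).
by have := ESnd f (den g HPex y); rewrite den_HP cpairK.
Qed.

Definition Join a b := ifzP PARITY (PComp a HALF) (PComp b HALF).

Lemma join_ok a b A B : (forall n, eval f a n (A n)) -> (forall n, eval f b n (B n)) ->
  forall j, eval f (Join a b) j (if odd j then B j./2 else A j./2).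
Proof.
move=> Ha Hb j.
have := ifzP_ok (parity_ok j) (EComp (half_ok j) (Ha _)) (EComp (half_ok j) (Hb _)).
by case: (odd j).
Qed.
End Join.

Definition JoinT a t := TComp (TPrec (TEmb (PComp a HALF)) (TComp (TComp t (TEmb HALF)) (TEmb PFst)))
                              (TPair (TEmb PId) (TEmb PARITY)).
Lemma inst_JoinT a t r : inst (JoinT a t) r = Join a (inst t r). Proof. by []. Qed.

Opaque cpair.

Lemma Phi_pickle p f n v : Phi (pickle p) f n v <-> eval f p n v.
Proof. rewrite /Phi pickleK; split => [[q [[<-] H]] | H] //; by exists p. Qed.

Lemma pcomp_tot X q G : (forall n, eval (chi X) q n (G n)) -> pcomputable X (fun n => Some (G n)).
Proof.
move=> H; exists (pickle q) => n v; rewrite Phi_pickle.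
by split => [[<-]|/(eval_det (H n)) ->].
Qed.

Lemma pcomp_ext X a a' : (forall n, a n = a' n) -> pcomputable X a -> pcomputable X a'.
Proof. by move=> E [e He]; exists e => n v; rewrite -E. Qed.

Definition LOOP := PMu ONE.
Lemma loop_none f x v : ~ eval f LOOP x v.
Proof. by move=> /inv_mu [/inv_comp [y [_ /inv_succ E]] _]. Qed.

Lemma pcomp_bot X : pcomputable X (fun _ => None).
Proof. by exists (pickle LOOP) => n v; rewrite Phi_pickle; split => // /loop_none. Qed.

Lemma tprog_of X G : tcomputable X G -> exists q, forall n, eval (chi X) q n (G n).
Proof.
case=> e H; have [q [Hq _]] := H 0; exists q => n.
have [q' [Hq' Hn]] := H n; rewrite Hq in Hq'; by case: Hq' => ->.
Qed.

Lemma app_some g h k : K2app g h k -> exists p : prog, unpickle (g 0) = Some p.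
Proof. by move=> H; have [q [Hq _]] := H 0; exists q. Qed.

Lemma app_prog g h k (p : prog) : K2app g h k -> unpickle (g 0) = Some p ->
  forall n, eval (pjoin (fun m => Some (g m)) (fun m => Some (h m))) p n (k n).
Proof. by move=> H Hp n; have [q [Hq Hn]] := H n; rewrite Hp in Hq; case: Hq => ->. Qed.

Lemma Bapp_gen (a b c : pfun) p : a 0 = Some (pickle p) ->
  (forall n v, c n = Some v <-> eval (pjoin a b) p n v) -> Bapp a b c.
Proof.
move=> Ha H n v; rewrite H Ha; split => [Hv|[e [[<-] /Phi_pickle]]] //.
by exists (pickle p); split => //; apply/Phi_pickle.
Qed.

Definition Zf : pfun := fun _ => Some 0.
Definition Bot : pfun := fun _ => None.
Definition numf e : pfun := fun _ => Some e.
Definition O1 := PComp POrc ONE.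
Definition pS := PComp PSucc O1.
Definition sig : pfun := fun _ => Some (pickle pS).
Definition pC := PComp PZero O1.
Definition cf : pfun := fun _ => Some (pickle pC).

Lemma one_val f x y : eval f ONE x y -> y = 1.
Proof. by move=> /(eval_det (one_ok _ _)). Qed.

Lemma Bapp_sig e : Bapp sig (numf e) (numf e.+1).
Proof.
apply: (@Bapp_gen _ _ _ pS) => // n v.
have H : eval (pjoin sig (numf e)) pS n e.+1.
  apply: EComp (ESucc _ _); apply: EComp (one_ok _ _) _; by constructor.
by split => [[<-]|/(eval_det H) <-].
Qed.

Lemma Bapp_c b : Bapp cf b (fun _ => if b 0 is Some _ then Some 0 else None).
Proof.
apply: (@Bapp_gen _ _ _ pC) => // n v; split.
  case E: (b 0) => [y|] // [<-].
  have Ho : eval (pjoin cf b) POrc 1 y by apply: EOrc; rewrite /pjoin /= E.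
  exact: EComp (EComp (one_ok _ _) Ho) (EZero _ _).
move=> /inv_comp [y [/inv_comp [z [/one_val -> /inv_orc]]]].
by rewrite /pjoin /= => -> /inv_zero ->.
Qed.

Definition DBLex := eS (eS (eRec (eC 0) (eS (eS (eSnd (eSnd eX)))) eX)).
Definition SHIFT := PComp POrc (comp DBLex).
Definition UU := PComp (subst U SHIFT) (PPair O1 O1).
Definition ph := PMu (PComp UU PFst).
Definition hf (X : nat -> bool) : pfun :=
  fun j => if j is j'.+1 then Some (nat_of_bool (X j')) else Some (pickle ph).
Definition HEX := eIfz eX (eC (pickle ph)) (eOrc (ePred eX)).

Lemma den_DBL g j : den g DBLex j = j.*2.+2.
Proof.
rewrite /DBLex [den _ _ _]/=; congr (_.+2); move: {1}j => x.
by elim: j => [|j IH] //=; rewrite IH !cpairK.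
Qed.

Lemma pc_h X : pcomputable X (hf X).
Proof.
apply: (@pcomp_ext _ (fun n => Some (den (fun n => nat_of_bool (X n)) HEX n))).
  by case.
by apply: pcomp_tot => n; apply: comp_ok_gen.
Qed.

Section H.
Variables (X : nat -> bool) (e : nat).
Let fj := pjoin (hf X) (numf e).
Let Gj j := if odd j then e else (if j./2 is j'.+1 then nat_of_bool (X j') else pickle ph).
Lemma fj_tot j : fj j = Some (Gj j).
Proof. by rewrite /fj /Gj /pjoin; case: (odd j) => //; case: (j./2). Qed.

Lemma shift_ok j : eval fj SHIFT j (nat_of_bool (X j)).
Proof.
apply: EComp; first exact: (comp_ok_gen fj_tot).
rewrite den_DBL; constructor.
by rewrite /fj /pjoin /= odd_double /= doubleK.
Qed.

Lemma o1_ok n : eval fj O1 n e.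
Proof. by apply: EComp (one_ok _ _) _; constructor. Qed.

Lemma UU_spec n w : eval fj UU n w <-> eval (chi X) U (cpair e e) w.
Proof.
have sh : forall j, chi X j = Some (nat_of_bool (X j)) by [].
split.
  move=> /inv_comp [y [/inv_pair [a [b [Ha Hb ->]]]]].
  rewrite -(eval_det (o1_ok n) Ha) -(eval_det (o1_ok n) Hb).
  exact: (subst_rev sh shift_ok).
move=> H; apply: EComp; first exact: EPair (o1_ok n) (o1_ok n).
exact: (subst_ok sh shift_ok).
Qed.

Lemma h_spec n v : eval fj ph n v <-> (eval (chi X) U (cpair e e) 0 /\ v = 0).
Proof.
split.
  move=> /inv_mu [/inv_comp [z [/inv_fst]]]; rewrite cpairK /= => -> /UU_spec H0 Hlt.
  split=> //; case: v Hlt => // v /(_ 0 erefl) [w /inv_comp [z2 [/inv_fst]]].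
  by rewrite cpairK /= => -> /UU_spec /(eval_det H0).
move=> [H0 ->]; apply: EMu; last by move=> z.
apply: (@EComp _ _ _ _ n); last exact/UU_spec.
by have := EFst fj (cpair n 0); rewrite cpairK.
Qed.

Lemma Bapp_h (b : pfun) : (forall n v, b n = Some v <-> (eval (chi X) U (cpair e e) 0 /\ v = 0)) ->
  Bapp (hf X) (numf e) b.
Proof. move=> Hb; apply: (@Bapp_gen _ _ _ ph) => // n v; rewrite Hb; exact: iff_sym (h_spec n v). Qed.
End H.

Opaque cpair.

Lemma k2sub X (A B C : nat -> nat) p a b :
  (forall n, eval (chi X) a n (A n)) -> (forall n, eval (chi X) b n (B n)) ->
  (forall n, eval (pjoin (fun m => Some (A m)) (fun m => Some (B m))) p n (C n)) ->
  forall n, eval (chi X) (subst p (Join a b)) n (C n).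
Proof.
move=> Ha Hb Hp n.
have gG : forall j, pjoin (fun m => Some (A m)) (fun m => Some (B m)) j =
                    Some (if odd j then B j./2 else A j./2).
  by move=> j; rewrite /pjoin; case: (odd j).
apply: (subst_ok gG) (Hp n) => j.
by apply: join_ok => //; exists (fun n => nat_of_bool (X n)).
Qed.

Lemma den_comp g a b x : den g (eComp a b) x = den g a (den g b x). Proof. by []. Qed.

Fixpoint Lf (q0 pS qS : prog) e := if e is e'.+1 then subst pS (Join qS (Lf q0 pS qS e')) else q0.

Lemma L_ok X (Fn : nat -> nat -> nat) (Fs : nat -> nat) q0 pS qS :
  (forall n, eval (chi X) q0 n (Fn 0 n)) -> (forall n, eval (chi X) qS n (Fs n)) ->
  (forall e n, eval (pjoin (fun m => Some (Fs m)) (fun m => Some (Fn e m))) pS n (Fn e.+1 n)) ->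
  forall e n, eval (chi X) (Lf q0 pS qS e) n (Fn e n).
Proof.
move=> H0 HS Hp; elim=> [|e IH] n //=.
exact: k2sub HS IH (Hp e) n.
Qed.

Unset Implicit Arguments.
Theorem corollary6p16 (X : nat -> bool) :
  ~ exists F : pfun -> (nat -> nat),
      [/\ (forall a, pcomputable X a -> tcomputable X (F a)),
          (forall a b, pcomputable X a -> pcomputable X b -> F a = F b -> a = b)
        & (forall a b c, pcomputable X a -> pcomputable X b -> Bapp a b c ->
             K2app (F a) (F b) (F c))].
Proof.
case=> F [Ht Hinj Happ].
have chitot : forall n, chi X n = Some (nat_of_bool (X n)) by [].
have pZ : pcomputable X Zf by apply: (@pcomp_tot _ (constp 0)) => n; exact: constp_ok.
have pB : pcomputable X Bot by exact: pcomp_bot.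
have pN : forall e, pcomputable X (numf e) by move=> e; apply: (@pcomp_tot _ (constp e)) => n; exact: constp_ok.
have pSg : pcomputable X sig by apply: (@pcomp_tot _ (constp (pickle pS))) => n; exact: constp_ok.
have pc : pcomputable X cf by apply: (@pcomp_tot _ (constp (pickle pC))) => n; exact: constp_ok.
have pH := pc_h X.
have [m Hm] : exists m, F Zf m <> F Bot m.
  apply: NNPP => H.
  have E : F Zf = F Bot.
    apply: functional_extensionality => m; apply: NNPP => ne; apply: H; by exists m.
  by have := Hinj _ _ pZ pB E => /(congr1 (fun a => a 0)).
have [qZ HqZ] := tprog_of (Ht _ pZ).
have [qS HqS] := tprog_of (Ht _ pSg).
have [qc Hqc] := tprog_of (Ht _ pc).
have [qh Hqh] := tprog_of (Ht _ pH).
have [pSK HpSK] := app_some (Happ _ _ _ pSg (pN 0) (Bapp_sig 0)).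
have [pCK HpCK] := app_some (Happ _ _ _ pc pZ (Bapp_c Zf)).
have [pHK HpHK] : exists p : prog, unpickle (F (hf X) 0) = Some p.
  case: (classic (eval (chi X) U (cpair 0 0) 0)) => H0.
  - apply: (app_some (Happ _ _ _ pH (pN 0) (@Bapp_h X 0 Zf _))) => n v.
    by split=> [[<-]|[_ ->]].
  - apply: (app_some (Happ _ _ _ pH (pN 0) (@Bapp_h X 0 Bot _))) => n v.
    by split=> // [[]].
pose L := Lf qZ pSK qS.
have HL : forall e n, eval (chi X) (L e) n (F (numf e) n).
  apply: (@L_ok X (fun e => F (numf e)) (F sig)); [exact: HqZ | exact: HqS | move=> e n].
  exact: (app_prog (Happ _ _ _ pSg (pN e) (Bapp_sig e)) HpSK).
pose Ts := tsubst pSK (JoinT qS THole).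
pose Tq := tsubst pCK (JoinT qc (tsubst pHK (JoinT qh THole))).
have LS : forall e, L e.+1 = inst Ts (L e) by move=> e; rewrite /Ts inst_tsubst inst_JoinT.
pose ITERLex := eRec (eC (code qZ)) (eComp (tx Ts) (eSnd (eSnd eX))) eX.
have denIT : forall g e, den g ITERLex e = code (L e).
  move=> g e; rewrite /ITERLex [den _ _ _]/=; move: {1}e => x.
  elim: e => [|e IH] //=; by rewrite IH !cpairK /= den_tx LS code_inst.
pose CODEQ := comp (eComp (tx Tq) ITERLex).
have HCQ : forall e, eval (chi X) CODEQ e (code (inst Tq (L e))).
  move=> e; have := comp_ok_gen chitot (eComp (tx Tq) ITERLex) e.
  by rewrite den_comp den_tx denIT code_inst.
pose Pprog := PComp (comp (eEq eX (eC (F Zf m)))) (PComp U (PPair CODEQ (constp m))).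
pose es := code Pprog.
have chain : forall b, pcomputable X b -> Bapp (hf X) (numf es) b -> Bapp cf b b ->
    eval (chi X) U (cpair es es) (F b m == F Zf m).
  move=> b pb Hb Hcb.
  have HM : forall n, eval (chi X) (subst pHK (Join qh (L es))) n (F b n).
    apply: k2sub Hqh (HL es) _.
    exact: (app_prog (Happ _ _ _ pH (pN es) Hb) HpHK).
  have HQ : forall n, eval (chi X) (inst Tq (L es)) n (F b n).
    rewrite /Tq inst_tsubst inst_JoinT inst_tsubst inst_JoinT /=.
    apply: k2sub Hqc HM _.
    exact: (app_prog (Happ _ _ _ pc pb Hcb) HpCK).
  have HU := @U_ok (fun n => nat_of_bool (X n)) _ _ _ (HQ m).
  apply: (@U_ok (fun n => nat_of_bool (X n))).
  apply: (@EComp _ _ _ _ (F b m)).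
    apply: (@EComp _ _ _ _ (cpair (code (inst Tq (L es))) m)) HU.
    by apply: EPair; [exact: HCQ | exact: constp_ok].
  by have := comp_ok_gen chitot (eEq eX (eC (F Zf m))) (F b m).
case: (classic (eval (chi X) U (cpair es es) 0)) => H0.
- have Hb : Bapp (hf X) (numf es) Zf by apply: Bapp_h => n v; split=> [[<-]|[_ ->]].
  have := chain Zf pZ Hb (Bapp_c Zf); rewrite eqxx => /(eval_det H0).
  by [].
- have Hb : Bapp (hf X) (numf es) Bot by apply: Bapp_h => n v; split=> // [[]].
  have := chain Bot pB Hb (Bapp_c Bot).
  have -> : (F Bot m == F Zf m) = false by apply/eqP => E; apply: Hm.
  by [].
Qed.
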